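(* Let $n$ be a positive integer and let $\lambda=(\lambda_1,\dots,\lambda_\ell)$ and $\mu=(\mu_1,\dots,\mu_{\ell'})$ be integer partitions of $n$ with $\mathrm{pre}_2(\lambda) = \mathrm{pre}_2(\mu)$. Then for every nonnegative integer $m$, $\sum_{i=1}^{\ell} \lambda_i^{2^m} = \sum_{i=1}^{\ell'} \mu_i^{2^m}$.
   Context: An integer partition $\lambda = (\lambda_1, \dots, \lambda_\ell)$ of a positive integer $n$ is a weakly decreasing finite sequence of positive integers whose sum is $n$; the $\lambda_i$ are its parts and $\ell(\lambda)=\ell$ is its length. For a partition $\lambda = (\lambda_1,\dots,\lambda_\ell)$, $\mathrm{pre}_2(\lambda)$ denotes the partition whose multiset of parts is the multiset $\{\!\{\lambda_i\lambda_j : 1 \le i < j \le \ell\}\!\}$ (with multiplicities, arranged in weakly decreasing order); if $\ell < 2$ it is the empty partition. *)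

(* Defs.v *)
From mathcomp Require Import all_boot.

Definition is_partition (n : nat) (la : seq nat) : bool :=
  [&& sorted geq la, all (fun x => 0 < x) la & sumn la == n].

(* pre_2(la): multiset {{ la_i * la_j : i < j }}, sorted weakly decreasingly. *)
Definition pre2 (la : seq nat) : seq nat :=
  sort geq (flatten [seq [seq nth 0 la i * nth 0 la j | j <- iota i.+1 (size la - i.+1)]
                   | i <- iota 0 (size la)]).

Example pre2_ex : pre2 [:: 3; 2; 1] = [:: 6; 3; 2].
Proof. by []. Qed.

(* Main.v *)
Require Import Defs.
From mathcomp Require Import all_boot all_algebra ring zify.

Fixpoint pr (s : seq nat) : seq nat :=
  match s with [::] => [::] | x :: t => [seq x * y | y <- t] ++ pr t end.

Lemma iotaS a n : iota a.+1 n = map S (iota a n).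
Proof. by rewrite -add1n iotaDl. Qed.

Lemma flat_pr s :
  flatten [seq [seq nth 0 s i * nth 0 s j | j <- iota i.+1 (size s - i.+1)]
                   | i <- iota 0 (size s)] = pr s.
Proof.
elim: s => [//|x t IH] /=.
rewrite -IH subn1 /= iotaS -!map_comp.
congr (_ ++ _).
  have E : t = map (nth 0 t) (iota 0 (size t)).
    by rewrite map_nth_iota0 // take_size.
  by rewrite [in RHS]E -map_comp.
congr flatten; apply: eq_map => i /=.
by rewrite subSS iotaS -map_comp.
Qed.

Lemma sq_id s k :
  (\sum_(x <- s) x ^ k) ^ 2 = \sum_(x <- s) x ^ (k * 2) + 2 * \sum_(y <- pr s) y ^ k.
Proof.
elim: s => [|x t IH]; first by rewrite !big_nil.
rewrite /= !big_cons big_cat /= big_map.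
have -> : \sum_(y <- t) (x * y) ^ k = x ^ k * \sum_(y <- t) y ^ k.
  by rewrite big_distrr /=; apply: eq_bigr => y _; rewrite expnMn.
rewrite sqrnD IH expnM.
set S := \sum_(_ <- t) _ ^ k. set T := \sum_(_ <- t) _. set U := \sum_(_ <- pr t) _.
rewrite !mulnDr; lia.
Qed.

Lemma pre2_sum s k : \sum_(y <- pre2 s) y ^ k = \sum_(y <- pr s) y ^ k.
Proof. by rewrite /pre2 (perm_big _ (permEl (perm_sort _ _))) flat_pr. Qed.

Theorem mainTheorem3 (n : nat) (la mu : seq nat) :
  0 < n -> is_partition n la -> is_partition n mu ->
  pre2 la = pre2 mu ->
  forall m : nat, \sum_(x <- la) x ^ (2 ^ m) = \sum_(x <- mu) x ^ (2 ^ m).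
Proof.
move=> _ /and3P[_ _ /eqP Hl] /and3P[_ _ /eqP Hm] Hp.
elim=> [|m IH].
  rewrite expn0; under eq_bigr do rewrite expn1.
  under [RHS]eq_bigr do rewrite expn1.
  by rewrite -!sumnE Hl Hm.
have := sq_id la (2 ^ m); have := sq_id mu (2 ^ m).
rewrite -!pre2_sum -Hp IH -expnSr => ->; lia.
Qed.
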